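(* The family of curves $\tanh\xi = \tan\eta\,\tan 2t$, $0<t<\frac\pi4$, where $\xi=x+y$ and $\eta=x-y$, is a solution to the mean curvature flow in the Minkowski plane $\mathbf R^{1,1}$.
   Context: $\mathbf R^{1,1}$ is $\mathbf R^2$ with $\langle (x_1,y_1),(x_2,y_2)\rangle = x_1x_2-y_1y_2$. For a space-like curve (tangent $v$ with $\langle v,v\rangle>0$), with Minkowski arc-length $s$, $T=X_s$, $N$ the reflection of $T$ across $y=x$, and $T_s=kN$, mean curvature flow means $\langle\partial_tX,N\rangle=-k$; equivalently, writing the curve as $\xi=\xi(\eta,t)$ with $\xi_\eta>0$, $\xi_t=\xi_{\eta\eta}/\xi_\eta$. *)

(* Defs.v *)
From Stdlib Require Export Reals.
From Coquelicot Require Export Coquelicot.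
Open Scope R_scope.

(* The domain of the family: 0 < t < pi/4, and eta such that tan eta is
   defined and |tan eta * tan 2t| < 1, so that tanh xi = tan eta tan 2t
   has a (unique) real solution xi. *)
Definition in_domain (eta t : R) : Prop :=
  0 < t < PI / 4 /\ cos eta <> 0 /\ Rabs (tan eta * tan (2 * t)) < 1.

(* Graph form of (Minkowski) mean curvature flow for a space-like curve
   written as xi = xi(eta, t):  xi_eta > 0 and xi_t = xi_{eta eta} / xi_eta. *)
Definition mcf_graph_at (xi : R -> R -> R) (eta t : R) : Prop :=
  ex_derive (fun e => xi e t) eta /\
  ex_derive (fun s => xi eta s) t /\
  ex_derive (fun e => Derive (fun e' => xi e' t) e) eta /\
  0 < Derive (fun e => xi e t) eta /\
  Derive (fun s => xi eta s) t =
    Derive_n (fun e => xi e t) 2 eta / Derive (fun e => xi e t) eta.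

(* Main.v *)
Require Import Defs.
From Stdlib Require Import Reals Lra.
From Coquelicot Require Import Coquelicot.
Open Scope R_scope.

Lemma tanh_inv x u : tanh x = u -> x = ln ((1+u)/(1-u)) / 2.
Proof.
  intros H. unfold tanh, sinh, cosh in H.
  assert (HE : 0 < exp x) by apply exp_pos.
  rewrite exp_Ropp in H.
  assert ((1+u)/(1-u) = exp (x + x)).
  { rewrite exp_plus, <- H. set (E := exp x) in *.
    assert (0 < /E) by (apply Rinv_0_lt_compat; auto).
    assert (E <> 0) by lra.
    assert (Hd : E * E + 1 <> 0) by nra.
    field_simplify; try lra. all: try (split; lra). all: try nra. }
  rewrite H0, ln_exp. field.
Qed.

Lemma loc_lt (h : R -> R) x : continuous h x -> Rabs (h x) < 1 -> locally x (fun y => Rabs (h y) < 1).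
Proof.
  intros Hc Hx.
  assert (He : 0 < 1 - Rabs (h x)) by lra.
  specialize (Hc _ (locally_ball (h x) (mkposreal _ He))).
  unfold filtermap in Hc. eapply filter_imp; [|exact Hc].
  intros y Hy. unfold ball in Hy; simpl in Hy; unfold AbsRing_ball, abs, minus, plus, opp in Hy; simpl in Hy.
  pose proof (Rabs_triang_inv (h y) (h x)). unfold Rminus in *. lra.
Qed.

Lemma loc_neq (h : R -> R) x : continuous h x -> h x <> 0 -> locally x (fun y => h y <> 0).
Proof.
  intros Hc Hx.
  assert (He : 0 < Rabs (h x)) by (apply Rabs_pos_lt; auto).
  specialize (Hc _ (locally_ball (h x) (mkposreal _ He))).
  unfold filtermap in Hc. eapply filter_imp; [|exact Hc].
  intros y Hy Hy0. unfold ball in Hy; simpl in Hy; unfold AbsRing_ball, abs, minus, plus, opp in Hy; simpl in Hy.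
  rewrite Hy0 in Hy. rewrite Rplus_0_l, Rabs_Ropp in Hy. lra.
Qed.
Definition G e s := sin e * sin (2*s) / (cos e * cos (2*s)).
Definition F e s := ln ((1 + G e s) / (1 - G e s)) / 2.
Definition den e s := cos e ^ 2 * cos (2*s) ^ 2 - sin e ^ 2 * sin (2*s) ^ 2.
Definition D1 e s := sin (2*s) * cos (2*s) / den e s.
Definition D2 e s := 2 * sin (2*s) * cos (2*s) * sin e * cos e / (den e s)^2.
Definition Dt e s := 2 * sin e * cos e / den e s.

Lemma dom_facts e s : in_domain e s ->
  cos e <> 0 /\ 0 < cos (2*s) /\ 0 < sin (2*s) /\ 0 < den e s /\ Rabs (G e s) < 1
  /\ tan e * tan (2*s) = G e s.
Proof.
  intros [[H1 H2] [H3 H4]].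
  assert (0 < cos (2*s)) by (apply cos_gt_0; lra).
  assert (0 < sin (2*s)) by (apply sin_gt_0; lra).
  assert (HG : tan e * tan (2*s) = G e s) by (unfold tan, G; field; lra).
  rewrite HG in H4.
  repeat split; auto.
  unfold den. apply Rabs_def2 in H4. destruct H4 as [H4a H4b].
  unfold G in *.
  set (a := sin e * sin (2*s)) in *. set (b := cos e * cos (2*s)) in *.
  assert (b <> 0) by (unfold b; apply Rmult_integral_contrapositive; split; lra).
  assert (Hb2 : 0 < b*b) by nra.
  assert ((a/b)*(a/b) < 1) by nra.
  assert (a*a < b*b).
  { replace (a*a) with ((a/b)*(a/b)*(b*b)) by (field; auto). nra. }
  unfold a, b in *. nra.
Qed.

Lemma G_bounds e s : in_domain e s -> 0 < 1 - G e s /\ 0 < 1 + G e s.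
Proof. intros H. destruct (dom_facts e s H) as (_&_&_&_&Hg&_). apply Rabs_def2 in Hg. lra. Qed.

Lemma dF_e e s : in_domain e s -> is_derive (fun e => F e s) e (D1 e s).
Proof.
  intros H. destruct (dom_facts e s H) as (Hc&HC&HS&Hd&Hg&_). destruct (G_bounds e s H) as [Hm Hp].
  unfold F, D1, G. unfold G in Hm, Hp.
  auto_derive.
  - repeat split; try lra; try (apply Rmult_integral_contrapositive; split; lra).
    all: try (apply Rdiv_lt_0_compat; lra).
  - unfold den in *. pose proof (sin2_cos2 e) as Ht. unfold Rsqr in Ht.
    clear Hg H. revert Hc HC HS Ht Hd Hm Hp. generalize (sin e) (cos e) (sin (2*s)) (cos (2*s)). intros a b S C Hc HC HS Ht Hd Hm Hp.
    assert (E : S * C / (b ^ 2 * C ^ 2 - a ^ 2 * S ^ 2) = S * C * (a*a+b*b) / (b ^ 2 * C ^ 2 - a ^ 2 * S ^ 2)) .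
    { rewrite Ht. field. intro; nra. }
    assert (F1 : (b*C)^2 - (a*S)^2 = b ^ 2 * C ^ 2 - a ^ 2 * S ^ 2) by ring.
    assert (F2 : (b*C + - (a*S)) * (b*C + a*S) = b ^ 2 * C ^ 2 - a ^ 2 * S ^ 2) by ring.
    rewrite E. field. rewrite F1. repeat split; try lra; intro Hz; rewrite Hz in F2; lra.
Qed.

Lemma dF_t e s : in_domain e s -> is_derive (fun s => F e s) s (Dt e s).
Proof.
  intros H. destruct (dom_facts e s H) as (Hc&HC&HS&Hd&Hg&_). destruct (G_bounds e s H) as [Hm Hp].
  unfold F, Dt, G. unfold G in Hm, Hp.
  auto_derive.
  - repeat split; try lra; try (apply Rmult_integral_contrapositive; split; lra).
    all: try (apply Rdiv_lt_0_compat; lra).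
  - unfold den in *. pose proof (sin2_cos2 (2*s)) as Ht. unfold Rsqr in Ht.
    clear Hg H. revert Hc HC HS Ht Hd Hm Hp. generalize (sin e) (cos e) (sin (2*s)) (cos (2*s)). intros a b S C Hc HC HS Ht Hd Hm Hp.
    assert (E : 2 * a * b / (b ^ 2 * C ^ 2 - a ^ 2 * S ^ 2) = 2 * a * b * (S*S+C*C) / (b ^ 2 * C ^ 2 - a ^ 2 * S ^ 2)) .
    { rewrite Ht. field. intro; nra. }
    assert (F1 : (b*C)^2 - (a*S)^2 = b ^ 2 * C ^ 2 - a ^ 2 * S ^ 2) by ring.
    assert (F2 : (b*C + - (a*S)) * (b*C + a*S) = b ^ 2 * C ^ 2 - a ^ 2 * S ^ 2) by ring.
    rewrite E. field. rewrite F1. repeat split; try lra; intro Hz; rewrite Hz in F2; lra.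
Qed.

Lemma dD1_e e s : in_domain e s -> is_derive (fun e => D1 e s) e (D2 e s).
Proof.
  intros H. destruct (dom_facts e s H) as (Hc&HC&HS&Hd&Hg&_).
  unfold D1, D2. unfold den in *.
  auto_derive.
  - lra.
  - pose proof (sin2_cos2 (2*s)) as Ht. unfold Rsqr in Ht.
    clear Hg H. revert Hc HC HS Ht Hd. generalize (sin e) (cos e) (sin (2*s)) (cos (2*s)). intros a b S C Hc HC HS Ht Hd.
    assert (E : 2 * S * C * a * b / (b ^ 2 * C ^ 2 - a ^ 2 * S ^ 2)^2 = 2 * S * C * a * b * (S*S+C*C) / (b ^ 2 * C ^ 2 - a ^ 2 * S ^ 2)^2) .
    { rewrite Ht. field. intro; nra. }
    rewrite E. field. lra.
Qed.

Lemma loc_eta eta t : in_domain eta t -> locally eta (fun e => in_domain e t).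
Proof.
  intros Hd. pose proof (dom_facts eta t Hd) as (Hc&HC&_).
  destruct Hd as [H1 [H2 H3]].
  assert (A1 : locally eta (fun e => cos e <> 0)).
  { apply (loc_neq cos); auto. apply (ex_derive_continuous (K:=R_AbsRing) (V:=R_NormedModule)). auto_derive. auto. }
  assert (A2 : locally eta (fun e => Rabs (tan e * tan (2*t)) < 1)).
  { apply (loc_lt (fun e => tan e * tan (2*t))); auto. apply (ex_derive_continuous (K:=R_AbsRing) (V:=R_NormedModule)).
    unfold tan. auto_derive. auto. }
  generalize (filter_and _ _ A1 A2). apply filter_imp. intros e [B1 B2]. split; auto.
Qed.

Lemma loc_t eta t : in_domain eta t -> locally t (fun s => in_domain eta s).
Proof.
  intros Hd. pose proof (dom_facts eta t Hd) as (Hc&HC&_).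
  destruct Hd as [H1 [H2 H3]].
  assert (A1 : locally t (fun s => Rabs ((s - PI/8)/(PI/8)) < 1)).
  { apply (loc_lt (fun s => (s - PI/8)/(PI/8))).
    - apply (ex_derive_continuous (K:=R_AbsRing) (V:=R_NormedModule)). auto_derive. pose proof PI_RGT_0. lra.
    - pose proof PI_RGT_0. apply Rabs_def1.
      + apply (Rmult_lt_reg_r (PI/8)); [lra|]. field_simplify; lra.
      + apply (Rmult_lt_reg_r (PI/8)); [lra|]. field_simplify; lra. }
  assert (A2 : locally t (fun s => Rabs (tan eta * tan (2*s)) < 1)).
  { apply (loc_lt (fun s => tan eta * tan (2*s))); auto. apply (ex_derive_continuous (K:=R_AbsRing) (V:=R_NormedModule)).
    unfold tan. auto_derive. lra. }
  generalize (filter_and _ _ A1 A2). apply filter_imp. intros s [B1 B2]. split; [|split]; auto.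
  pose proof PI_RGT_0. apply Rabs_def2 in B1. destruct B1 as [B1 B1'].
  assert (K1 : (s - PI/8) < PI/8).
  { apply (Rmult_lt_reg_r (/(PI/8))). apply Rinv_0_lt_compat; lra. 
    replace (PI/8 * /(PI/8)) with 1 by (field; lra). exact B1. }
  assert (K2 : - (PI/8) < (s - PI/8)).
  { apply (Rmult_lt_reg_r (/(PI/8))). apply Rinv_0_lt_compat; lra. 
    replace (- (PI/8) * /(PI/8)) with (-1) by (field; lra). exact B1'. }
  lra.
Qed.

Theorem theorem11p2 :
  forall xi : R -> R -> R,
    (forall eta t, in_domain eta t ->
       tanh (xi eta t) = tan eta * tan (2 * t)) ->
    forall eta t, in_domain eta t -> mcf_graph_at xi eta t.
Proof.
  intros xi Hxi eta t Hd.
  assert (Heq : forall e s, in_domain e s -> F e s = xi e s).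
  { intros e s H. pose proof (dom_facts e s H) as (_&_&_&_&_&HG).
    unfold F. rewrite <- HG. symmetry. apply tanh_inv. auto. }
  assert (De : is_derive (fun e => xi e t) eta (D1 eta t)).
  { apply (is_derive_ext_loc (fun e => F e t)); [|apply dF_e; auto].
    generalize (loc_eta eta t Hd). apply filter_imp. intros e He. apply Heq; auto. }
  assert (Dts : is_derive (fun s => xi eta s) t (Dt eta t)).
  { apply (is_derive_ext_loc (fun s => F eta s)); [|apply dF_t; auto].
    generalize (loc_t eta t Hd). apply filter_imp. intros s Hs. apply Heq; auto. }
  assert (De2 : is_derive (fun e => Derive (fun e' => xi e' t) e) eta (D2 eta t)).
  { apply (is_derive_ext_loc (fun e => D1 e t)); [|apply dD1_e; auto].
    pose proof (loc_eta eta t Hd) as L.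
    generalize (filter_and _ _ L (locally_locally _ _ L)). apply filter_imp.
    intros e [He Le]. symmetry. apply is_derive_unique.
    apply (is_derive_ext_loc (fun e => F e t)); [|apply dF_e; auto].
    generalize Le. apply filter_imp. intros e' He'. apply Heq; auto. }
  pose proof (dom_facts eta t Hd) as (Hc&HC&HS&Hden&_).
  assert (E1 : Derive (fun e => xi e t) eta = D1 eta t) by (apply is_derive_unique; exact De).
  assert (E2 : Derive (fun s => xi eta s) t = Dt eta t) by (apply is_derive_unique; exact Dts).
  assert (E3 : Derive (fun e => Derive (fun e' => xi e' t) e) eta = D2 eta t) by (apply is_derive_unique; exact De2).
  split; [eexists; exact De|].
  split; [eexists; exact Dts|].
  split; [eexists; exact De2|].
  split.
  - rewrite E1. unfold D1. apply Rdiv_lt_0_compat; auto. nra.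
  - change (Derive_n (fun e => xi e t) 2 eta) with (Derive (fun e => Derive (fun e' => xi e' t) e) eta).
    rewrite E1, E2, E3.
    unfold Dt, D2, D1. field. repeat split; lra.
Qed.
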